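(* Let $N$ be a nontrivial normal subgroup of $G_2$. If $\phi(N)\simeq A_8$, then $N=L$, where $L$ is the set of elements of $G_2$ expressible as a word of even length in the generators $u,d,f,b,l,r$ and their inverses.
   Context: The $2\times2\times2$ Rubik's cube consists of 8 corner cubelets, each carrying 3 colored stickers. Corner positions are numbered 1 = top-front-left, 2 = top-front-right, 3 = top-back-left, 4 = top-back-right, 5 = bottom-front-left, 6 = bottom-front-right, 7 = bottom-back-left, 8 = bottom-back-right. $G_2$ is the subgroup of the symmetric group on the 24 stickers generated by the six moves $u,d,f,b,l,r$ rotating respectively the top, bottom, front, back, left, right layer of four cubelets by $90^\circ$ clockwise as seen from outside facing that face. $\phi:G_2\to S_8$ records the permutation of corner positions. *)

(* Defs.v *)
From mathcomp Require Import all_boot all_fingroup.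
From mathcomp Require Import alt.
Set Implicit Arguments. Unset Strict Implicit. Unset Printing Implicit Defensive.
Local Open Scope group_scope.

(* Corner positions (0-indexed): 0 = top-front-left, 1 = top-front-right,
   2 = top-back-left, 3 = top-back-right, 4 = bottom-front-left,
   5 = bottom-front-right, 6 = bottom-back-left, 7 = bottom-back-right
   (paper's positions 1..8).
   Sticker 3*c + k sits on corner position c; k = 0: its U/D face,
   k = 1: its F/B face, k = 2: its L/R face. *)

(* A quarter turn about the axis of face-type [ax] keeps stickers of type [ax]
   on the same face type and swaps the other two face types. *)
Definition swap_type (ax k : nat) : nat :=
  if k == ax then k else 3 - ax - k.

Definition move_nat (cyc : nat -> nat) (ax : nat) (n : nat) : nat :=
  if cyc (n %/ 3) == n %/ 3 then n
  else 3 * cyc (n %/ 3) + swap_type ax (n %% 3).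

Definition move_fun (cyc : nat -> nat) (ax : nat) (s : 'I_24) : 'I_24 :=
  inord (move_nat cyc ax s).

(* clockwise 4-cycles of corner positions, as seen from outside the face *)
Definition cyc_u (c : nat) : nat :=
  match c with 2 => 3 | 3 => 1 | 1 => 0 | 0 => 2 | _ => c end.
Definition cyc_d (c : nat) : nat :=
  match c with 6 => 4 | 4 => 5 | 5 => 7 | 7 => 6 | _ => c end.
Definition cyc_f (c : nat) : nat :=
  match c with 0 => 1 | 1 => 5 | 5 => 4 | 4 => 0 | _ => c end.
Definition cyc_b (c : nat) : nat :=
  match c with 2 => 6 | 6 => 7 | 7 => 3 | 3 => 2 | _ => c end.
Definition cyc_l (c : nat) : nat :=
  match c with 2 => 0 | 0 => 4 | 4 => 6 | 6 => 2 | _ => c end.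
Definition cyc_r (c : nat) : nat :=
  match c with 1 => 3 | 3 => 7 | 7 => 5 | 5 => 1 | _ => c end.

Lemma move_fun_inj cyc ci ax :
  all (fun n => (move_nat cyc ax n < 24) &&
                (move_nat ci ax (move_nat cyc ax n) == n)) (iota 0 24) ->
  injective (move_fun cyc ax).
Proof.
move=> /allP H x y Exy.
have mem (z : 'I_24) : (nat_of_ord z \in iota 0 24) by rewrite mem_iota ltn_ord.
case/andP: (H x (mem x)) => lx /eqP ix.
case/andP: (H y (mem y)) => ly /eqP iy.
have E : move_nat cyc ax x = move_nat cyc ax y.
  by move: (congr1 val Exy); rewrite /move_fun /= !inordK.
by apply/val_inj => /=; rewrite -ix E iy.
Qed.

Lemma move_u_inj : injective (move_fun cyc_u 0).
Proof. by apply: (@move_fun_inj _ (cyc_u \o cyc_u \o cyc_u)). Qed.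
Lemma move_d_inj : injective (move_fun cyc_d 0).
Proof. by apply: (@move_fun_inj _ (cyc_d \o cyc_d \o cyc_d)). Qed.
Lemma move_f_inj : injective (move_fun cyc_f 1).
Proof. by apply: (@move_fun_inj _ (cyc_f \o cyc_f \o cyc_f)). Qed.
Lemma move_b_inj : injective (move_fun cyc_b 1).
Proof. by apply: (@move_fun_inj _ (cyc_b \o cyc_b \o cyc_b)). Qed.
Lemma move_l_inj : injective (move_fun cyc_l 2).
Proof. by apply: (@move_fun_inj _ (cyc_l \o cyc_l \o cyc_l)). Qed.
Lemma move_r_inj : injective (move_fun cyc_r 2).
Proof. by apply: (@move_fun_inj _ (cyc_r \o cyc_r \o cyc_r)). Qed.

Definition mv_u : {perm 'I_24} := perm move_u_inj.
Definition mv_d : {perm 'I_24} := perm move_d_inj.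
Definition mv_f : {perm 'I_24} := perm move_f_inj.
Definition mv_b : {perm 'I_24} := perm move_b_inj.
Definition mv_l : {perm 'I_24} := perm move_l_inj.
Definition mv_r : {perm 'I_24} := perm move_r_inj.

Definition cube_gens : seq {perm 'I_24} := [:: mv_u; mv_d; mv_f; mv_b; mv_l; mv_r].

Definition G2 : {group {perm 'I_24}} := <<[set x in cube_gens]>>%G.

(* phi : G_2 -> S_8, the induced permutation of corner positions:
   phi g sends c to the position of the cubelet that g moves away from c.
   (Defined on all of Sym(24), with default 1 where this is not a
   permutation; on G_2 it is the homomorphism of the paper.) *)
Definition corner_of (s : 'I_24) : 'I_8 := inord (s %/ 3).
Definition phi (g : {perm 'I_24}) : {perm 'I_8} :=
  insubd (1 : {perm 'I_8}) [ffun c : 'I_8 => corner_of (g (inord (3 * c)))].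

Definition in_L (g : {perm 'I_24}) : Prop :=
  exists w : seq {perm 'I_24},
    [/\ all (fun x => (x \in cube_gens) || (x^-1 \in cube_gens)) w,
        ~~ odd (size w) & g = \prod_(x <- w) x].

(* Main.v *)
Require Import Defs.
From mathcomp Require Import all_boot all_fingroup ssralg zmodp.
From mathcomp Require Import alt gseries zify.
Set Implicit Arguments. Unset Strict Implicit. Unset Printing Implicit Defensive.
Import GRing.Theory.

Definition parn (c : nat) : bool := [|| c == 1%N, c == 2%N, c == 4%N | c == 7%N].
Definition flip (k : nat) : nat := (3 - k) %% 3.
Definition stn (c i : nat) : nat := 3 * c + (if parn c then flip i else i).
Definition nln (n : nat) : nat := if parn (n %/ 3) then flip (n %% 3) else n %% 3.

Lemma all_ord n (P : nat -> bool) : all P (iota 0 n) -> forall i : 'I_n, P i.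
Proof. by move/allP => H i; apply: H; rewrite mem_iota add0n ltn_ord. Qed.

Lemma blk_lt (s : 'I_24) : s %/ 3 < 8.
Proof. by rewrite ltn_divLR. Qed.
Definition blk (s : 'I_24) : 'I_8 := Ordinal (blk_lt s).
Lemma nl_lt (s : 'I_24) : nln s < 3.
Proof. by rewrite /nln /flip; case: parn; rewrite ltn_pmod. Qed.
Definition nl (s : 'I_24) : 'I_3 := Ordinal (nl_lt s).
Lemma st_lt (c : 'I_8) (i : 'I_3) : stn c i < 24.
Proof.
have := all_ord (P := fun c => all (fun i => stn c i < 24) (iota 0 3)) (n := 8) (erefl true).
by move/(_ c)/all_ord/(_ i).
Qed.
Definition st (c : 'I_8) (i : 'I_3) : 'I_24 := Ordinal (st_lt c i).

Lemma blk_st c i : blk (st c i) = c.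
Proof.
apply/val_inj => /=.
have := all_ord (P := fun c => all (fun i => stn c i %/ 3 == c) (iota 0 3)) (n := 8) (erefl true).
by move/(_ c)/all_ord/(_ i)/eqP.
Qed.
Lemma nl_st c i : nl (st c i) = i.
Proof.
apply/val_inj => /=.
have := all_ord (P := fun c => all (fun i => nln (stn c i) == i) (iota 0 3)) (n := 8) (erefl true).
by move/(_ c)/all_ord/(_ i)/eqP.
Qed.
Lemma st_blk s : st (blk s) (nl s) = s.
Proof.
apply/val_inj => /=.
have := all_ord (P := fun s => stn (s %/ 3) (nln s) == s) (n := 24) (erefl true).
by move/(_ s)/eqP.
Qed.
Lemma stn0 c : stn c 0 = 3 * c.
Proof. by rewrite /stn /flip; case: parn; rewrite ?addn0. Qed.

Definition mono_fun (s : {perm 'I_8}) (a : 'I_8 -> 'I_3) (x : 'I_24) : 'I_24 :=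
  st (s (blk x)) (a (blk x) + nl x)%R.
Lemma mono_inj s a : injective (mono_fun s a).
Proof.
move=> x y E.
have Eb : blk x = blk y.
  by move: (congr1 blk E); rewrite /mono_fun !blk_st => /perm_inj.
have En : nl x = nl y.
  by move: (congr1 nl E); rewrite /mono_fun !nl_st Eb => /addrI.
by rewrite -(st_blk x) -(st_blk y) Eb En.
Qed.
Definition mono s a : {perm 'I_24} := perm (@mono_inj s a).

Lemma monoE s a c i : mono s a (st c i) = st (s c) (a c + i)%R.
Proof. by rewrite permE /mono_fun blk_st nl_st. Qed.

Lemma mono_ext s a b : (forall c, a c = b c) -> mono s a = mono s b.
Proof. by move=> H; apply/permP => x; rewrite -(st_blk x) !monoE H. Qed.

Lemma monoM s a t b :
  (mono s a * mono t b)%g = mono (s * t)%g (fun c => b (s c) + a c)%R.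
Proof. by apply/permP => x; rewrite -(st_blk x) permM !monoE permM addrA. Qed.

Lemma mono1 : mono 1%g (fun _ => 0%R) = 1%g.
Proof. by apply/permP => x; rewrite -(st_blk x) monoE !perm1 add0r. Qed.

Lemma mono_inj2 s a t b : mono s a = mono t b -> s = t /\ forall c, a c = b c.
Proof.
move=> E.
have H c : st (s c) (a c + 0)%R = st (t c) (b c + 0)%R by rewrite -!monoE E.
split; first by apply/permP => c; move: (congr1 blk (H c)); rewrite !blk_st.
by move=> c; move: (congr1 nl (H c)); rewrite !nl_st !addr0.
Qed.

Lemma phi_mono s a : phi (mono s a) = s.
Proof.
rewrite /phi.
have -> : [ffun c : 'I_8 => corner_of (mono s a (inord (3 * c)))] = pval s.
  apply/ffunP => c; rewrite ffunE.
  have -> : (inord (3 * c) : 'I_24) = st c 0%R.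
    apply/val_inj; rewrite /= stn0 inordK //.
    by rewrite ltnS (@leq_trans (3 * 7)) // leq_mul2l -ltnS ltn_ord.
  rewrite monoE /corner_of; apply/val_inj; rewrite /= inordK.
    have /(congr1 val) /= -> := blk_st (s c) (a c + 0)%R. by rewrite pvalE.
  exact: (blk_lt (st (s c) (a c + 0)%R)).
exact: valKd.
Qed.

Definition Mset : {set {perm 'I_24}} :=
  [set g | [exists s : {perm 'I_8}, exists a : {ffun 'I_8 -> 'I_3},
              (g == mono s a) && (\sum_c a c == 0)%R]].

Lemma inM g : g \in Mset <-> exists s (a : 'I_8 -> 'I_3), g = mono s a /\ (\sum_c a c = 0)%R.
Proof.
rewrite inE; split.
  by case/existsP => s /existsP [a /andP [/eqP -> /eqP H]]; exists s, a.
case=> s [a [-> H]]; apply/existsP; exists s; apply/existsP; exists [ffun c => a c].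
apply/andP; split.
  by apply/eqP/mono_ext => c; rewrite ffunE.
by apply/eqP; rewrite -[RHS]H; apply: eq_bigr => c _; rewrite ffunE.
Qed.

Lemma Mset_group : group_set Mset.
Proof.
apply/andP; split.
  by apply/inM; exists 1%g, (fun _ => 0%R); rewrite mono1 big1.
apply/subsetP => _ /mulsgP [g h /inM [s [a [-> Ha]]] /inM [t [b [-> Hb]]] ->].
apply/inM; rewrite monoM; eexists; eexists; split; first by [].
rewrite big_split /= Ha addr0 -[RHS]Hb. by rewrite [RHS](reindex_inj (@perm_inj _ s)).
Qed.
Canonical Mgroup := Group Mset_group.

Lemma phiM g h : g \in Mset -> h \in Mset -> phi (g * h)%g = (phi g * phi h)%g.
Proof.
by move=> /inM [s [a [-> _]]] /inM [t [b [-> _]]]; rewrite monoM !phi_mono.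
Qed.

Lemma phi1 : phi 1%g = 1%g.
Proof. by rewrite -mono1 phi_mono. Qed.

Lemma phiV g : g \in Mset -> phi (g^-1)%g = ((phi g)^-1)%g.
Proof.
move=> Hg; apply/eqP; rewrite eq_sym eq_invg_mul -phiM ?groupV //.
by rewrite mulgV phi1.
Qed.

Lemma inM_phi g : g \in Mset -> exists a : 'I_8 -> 'I_3, g = mono (phi g) a /\ (\sum_c a c = 0)%R.
Proof. by move=> /inM [s [a [-> H]]]; exists a; rewrite phi_mono. Qed.

Definition gen_nat (k : nat) : nat -> nat :=
  nth id [:: move_nat cyc_u 0; move_nat cyc_d 0; move_nat cyc_f 1;
             move_nat cyc_b 1; move_nat cyc_l 2; move_nat cyc_r 2] k.
Definition gen_of (k : nat) : {perm 'I_24} := nth 1%g cube_gens k.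

Lemma move_bound cyc ax (x : 'I_24) :
  all (fun n => move_nat cyc ax n < 24) (iota 0 24) ->
  val (move_fun cyc ax x) = move_nat cyc ax x.
Proof. by move/all_ord/(_ x) => H; rewrite /move_fun; exact: inordK. Qed.

Lemma val_gen k (x : 'I_24) : k < 6 -> val (gen_of k x) = gen_nat k x.
Proof.
case: k => [|[|[|[|[|[|//]]]]]] _; rewrite /gen_of /= permE; exact: move_bound.
Qed.

Lemma gen_of_G2 k : k < 6 -> gen_of k \in G2.
Proof. by move=> Hk; rewrite mem_gen // inE mem_nth. Qed.

Definition i8 (n : nat) : 'I_8 := inZp n.
Definition tpn (x y z : nat) : nat := if z == x then y else if z == y then x else z.
Lemma val_tperm (x y z : 'I_8) : val (tperm x y z) = tpn x y z.
Proof.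
rewrite /tpn; case: tpermP => [->|->|/eqP Hx /eqP Hy]; rewrite ?eqxx //.
  by case: eqP => // /val_inj ->.
by rewrite !val_eqE (negbTE Hx) (negbTE Hy).
Qed.

Definition gen_cyc (k : nat) : seq nat :=
  nth [::] [:: [:: 0; 2; 3; 1]; [:: 4; 5; 7; 6]; [:: 0; 1; 5; 4]; [:: 2; 6; 7; 3]; [:: 0; 4; 6; 2]; [:: 1; 3; 7; 5]] k.
Definition gen_al (k : nat) : seq nat :=
  nth [::] [:: [:: 0; 0; 0; 0; 0; 0; 0; 0]; [:: 0; 0; 0; 0; 0; 0; 0; 0]; [:: 1; 2; 0; 0; 2; 1; 0; 0]; [:: 0; 0; 2; 1; 0; 0; 1; 2]; [:: 2; 0; 1; 0; 1; 0; 2; 0]; [:: 0; 1; 0; 2; 0; 2; 0; 1]] k.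
Definition cy k i := nth 0 (gen_cyc k) i.
Definition gen_sig (k : nat) : {perm 'I_8} :=
  (tperm (i8 (cy k 0)) (i8 (cy k 1)) * tperm (i8 (cy k 0)) (i8 (cy k 2)) *
   tperm (i8 (cy k 0)) (i8 (cy k 3)))%g.
Definition gen_sn (k : nat) (c : nat) : nat :=
  tpn (cy k 0 %% 8) (cy k 3 %% 8) (tpn (cy k 0 %% 8) (cy k 2 %% 8) (tpn (cy k 0 %% 8) (cy k 1 %% 8) c)).
Definition gen_a (k : nat) (c : 'I_8) : 'I_3 := inZp (nth 0 (gen_al k) c).

Lemma mono_bridge (g : {perm 'I_24}) (gn : nat -> nat) (s : {perm 'I_8}) (sn : nat -> nat)
  (a : 'I_8 -> 'I_3) (an : nat -> nat) :
  (forall x : 'I_24, val (g x) = gn x) -> (forall c : 'I_8, val (s c) = sn c) ->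
  (forall c : 'I_8, val (a c) = an c) ->
  all (fun x => gn x == stn (sn (x %/ 3)) ((an (x %/ 3) + nln x) %% 3)) (iota 0 24) ->
  g = mono s a.
Proof.
move=> Hg Hs Ha /all_ord H; apply/permP => x; apply/val_inj.
rewrite Hg permE /mono_fun /= Hs Ha; exact/eqP/(H x).
Qed.

Lemma gen_mono k : k < 6 -> gen_of k = mono (gen_sig k) (gen_a k).
Proof.
move=> Hk; apply: (@mono_bridge _ (gen_nat k) _ (gen_sn k) _ (fun c => nth 0 (gen_al k) c %% 3)).
- by move=> x; exact: val_gen.
- by move=> c; rewrite /gen_sig !permM !val_tperm.
- by [].
have : all (fun k => all (fun x => gen_nat k x == stn (gen_sn k (x %/ 3))
            (((nth 0 (gen_al k) (x %/ 3) %% 3) + nln x) %% 3)) (iota 0 24)) (iota 0 6).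
  by vm_compute.
by move/allP/(_ k); rewrite mem_iota; apply.
Qed.

Lemma gen_sum k : k < 6 -> (\sum_c gen_a k c = 0)%R.
Proof.
case: k => [|[|[|[|[|[|//]]]]]] _; rewrite !big_ord_recl big_ord0; by apply/val_inj.
Qed.

Lemma gen_odd k : k < 6 -> odd_perm (gen_sig k).
Proof.
by case: k => [|[|[|[|[|[|//]]]]]] _; rewrite /gen_sig !odd_permM !odd_tperm.
Qed.

Lemma gen_M k : k < 6 -> gen_of k \in Mset.
Proof. by move=> Hk; apply/inM; exists (gen_sig k), (gen_a k); rewrite gen_mono ?gen_sum. Qed.

Lemma phi_gen k : k < 6 -> phi (gen_of k) = gen_sig k.
Proof. by move=> Hk; rewrite gen_mono ?phi_mono. Qed.

Lemma G2_M : G2 \subset Mset.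
Proof.
rewrite gen_subG; apply/subsetP => x; rewrite inE => Hx.
have [k Hk ->] : exists2 k, k < 6 & x = gen_of k.
  by exists (index x cube_gens); rewrite ?index_mem // /gen_of nth_index.
exact: gen_M.
Qed.

Lemma G2M g : g \in G2 -> g \in Mset.
Proof. by move/(subsetP G2_M). Qed.

Lemma gen_idx x : x \in cube_gens -> exists2 k, k < 6 & x = gen_of k.
Proof. by move=> Hx; exists (index x cube_gens); rewrite ?index_mem // /gen_of nth_index. Qed.

Lemma odd_phi_gen x : x \in cube_gens -> odd_perm (phi x).
Proof. by case/gen_idx => k Hk ->; rewrite phi_gen // gen_odd. Qed.

Definition genV (x : {perm 'I_24}) := (x \in cube_gens) || ((x^-1)%g \in cube_gens).

Lemma genV_G2 x : genV x -> x \in G2 /\ odd_perm (phi x).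
Proof.
case/orP => Hx.
  by split; [rewrite mem_gen // inE | exact: odd_phi_gen].
have Gx : (x^-1)%g \in G2 by rewrite mem_gen // inE.
have Gx' : x \in G2 by rewrite -groupV.
split=> //.
by rewrite -[x]invgK phiV ?G2M // odd_permV odd_phi_gen.
Qed.

Lemma word_G2 (w : seq {perm 'I_24}) : all genV w ->
  (\prod_(x <- w) x)%g \in G2 /\ odd_perm (phi (\prod_(x <- w) x)%g) = odd (size w).
Proof.
elim: w => [|x w IH]; first by rewrite big_nil group1 phi1 odd_perm1.
case/andP => /genV_G2 [Gx Ox] /IH [GP OP].
rewrite big_cons groupM // phiM ?G2M // odd_permM Ox OP; split=> //.
Qed.

Lemma phiN_group (N : {group {perm 'I_24}}) : N \subset G2 -> group_set (phi @: N).
Proof.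
move=> sNG; apply/andP; split.
  by rewrite -phi1 imset_f.
apply/subsetP => _ /mulsgP [_ _ /imsetP [a Na ->] /imsetP [b Nb ->] ->].
have Ga := subsetP sNG a Na; have Gb := subsetP sNG b Nb.
by rewrite -phiM ?G2M // imset_f // groupM.
Qed.

Definition A8 : {group {perm 'I_8}} := ('Alt_('I_8))%G.

Lemma phiN_Alt (N : {group {perm 'I_24}}) : N \subset G2 ->
  (phi @: N) \isog ('Alt_('I_8))%g -> phi @: N = ('Alt_('I_8))%g.
Proof.
move=> sNG iso.
pose H := Group (phiN_group sNG).
have cH : #|H| = #|A8| by apply: card_isog.
have cA : (2 * #|A8|)%N = 8`!.
  by have := @card_Alt 'I_8; rewrite card_ord; apply.
have Abig : 2 < #|A8|.
  by rewrite -(ltn_pmul2l (isT : 0 < 2)) cA.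
pose K := (H :&: A8)%G.
have sKA : K \subset A8 by apply: subsetIr.
have HL := Lagrange sKA.
have HM := mul_cardG H A8.
have HAle : #|(H * A8)%g| <= 2 * #|A8|.
  by rewrite cA; have := max_card (mem (H * A8)%g); rewrite card_Sn.
have Kpos : 0 < #|K| by apply: cardG_gt0.
have le1 : #|A8| <= 2 * #|K|.
  rewrite -(leq_pmul2l (cardG_gt0 A8)).
  have -> : (#|A8| * #|A8|)%N = (#|H| * #|A8|)%N by rewrite cH.
  by rewrite HM mulnA leq_mul2r (mulnC #|A8|) HAle orbT.
have idx_le : #|A8 : K|%g <= 2.
  by rewrite -(leq_pmul2l Kpos) HL mulnC.
have ipos : 0 < #|A8 : K|%g by apply: indexg_gt0.
have i2 : #|A8 : K|%g != 2.
  apply/eqP => i2.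
  have nK : (K <| A8)%g by apply: index2_normal.
  have c5 : 4 < #|'I_8| by rewrite card_ord.
  have /simpleP [_ /(_ K nK) [] E] := simple_Alt5 c5.
    by move: HL Abig; rewrite i2 E cards1 => <-.
  have cK : #|K| = #|A8| by rewrite E.
  move: HL Abig; rewrite i2 cK -{2}(muln1 #|A8|) => /eqP.
  by rewrite eqn_mul2l => /orP [/eqP ->|].

have i1 : #|A8 : K|%g = 1.
  by move: idx_le ipos i2; case: (#|A8 : K|%g) => [|[|[|]]].
have EK : K :=: A8.
  by apply/eqP; rewrite eqEcard sKA -HL i1 muln1 leqnn.
have sAH : A8 \subset H by rewrite -EK subsetIl.
have : A8 :==: H by rewrite eqEcard sAH cH leqnn.
by move/eqP => <-.
Qed.

Definition tword : seq nat := [:: 3; 1; 3; 3; 3; 1; 1; 1; 3; 1; 3; 3; 3; 1; 1; 1; 3; 1; 3; 3; 3; 1; 1; 1; 3; 1; 3; 3; 3; 1; 1; 1; 0; 0; 0; 3; 1; 3; 3; 3; 1; 1; 1; 3; 1; 3; 3; 3; 1; 1; 1; 0].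
Definition tw : {perm 'I_24} := (\prod_(k <- tword) gen_of k)%g.

Lemma val_word (w : seq nat) (x : 'I_24) : all (fun k => k < 6) w ->
  val ((\prod_(k <- w) gen_of k)%g x) = foldl (fun n k => gen_nat k n) x w.
Proof.
elim: w x => [|k w IH] x; first by rewrite big_nil perm1.
case/andP => Hk Hw; rewrite big_cons permM IH //= val_gen //.
Qed.


Definition vecn (l : seq nat) (c : 'I_8) : 'I_3 := inZp (nth 0 l c).

Lemma tw_G2 : tw \in G2.
Proof.
rewrite /tw; elim: tword (erefl true : all (fun k => k < 6) tword) => [|k w IH].
  by rewrite big_nil group1.
by case/andP => Hk Hw; rewrite big_cons groupM ?gen_of_G2 ?IH.
Qed.

Lemma tw_mono : tw = mono 1%g (vecn [:: 0; 0; 2; 1; 0; 0; 0; 0]).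
Proof.
apply: (@mono_bridge _ (fun x => foldl (fun n k => gen_nat k n) x tword) _ id _
          (fun c => nth 0 [:: 0; 0; 2; 1; 0; 0; 0; 0] c %% 3)).
- by move=> x; apply: val_word.
- by move=> c; rewrite perm1.
- by [].
by vm_compute.
Qed.

Lemma conj_mono (p : {perm 'I_8}) b v u : (forall c, u (p c) = v c) ->
  ((mono 1%g v) ^ (mono p b))%g = mono 1%g u.
Proof.
move=> H; apply: (mulgI (mono p b)); rewrite /conjg mulKVg !monoM.
rewrite mulg1 mul1g; apply: mono_ext => c; by rewrite perm1 H addrC.
Qed.

Lemma mono_inv v : ((mono 1%g v)^-1)%g = mono 1%g (fun c => - v c)%R.
Proof.
apply/eqP; rewrite eq_invg_mul monoM mulg1 -mono1; apply/eqP/mono_ext => c.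
by rewrite perm1 addNr.
Qed.

Definition dlt (c : 'I_8) (k : 'I_3) (x : 'I_8) : 'I_3 :=
  if val x == val c then k else if val x == 0 then (- k)%R else 0%R.
Definition pi0 : {perm 'I_8} := (tperm (i8 0) (i8 2) * tperm (i8 4) (i8 5))%g.
Definition tA := [:: 0; 2; 3; 2; 2; 2; 2; 2].
Definition tB := [:: 1; 1; 4; 3; 4; 5; 6; 7].
Definition tC := [:: 0; 6; 5; 6; 6; 6; 4; 4].
Definition tD := [:: 1; 7; 6; 7; 7; 7; 5; 5].
Definition pic (c : nat) : {perm 'I_8} :=
  (tperm (i8 (nth 0 tA c)) (i8 (nth 0 tB c)) * tperm (i8 (nth 0 tC c)) (i8 (nth 0 tD c)))%g.

Lemma alt_pi0 : pi0 \in ('Alt_('I_8))%g.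
Proof. by rewrite Alt_even /pi0 odd_permM !odd_tperm. Qed.

Lemma alt_pic (c : 'I_8) : pic c \in ('Alt_('I_8))%g.
Proof.
rewrite Alt_even /pic odd_permM !odd_tperm.
by case: c => [[|[|[|[|[|[|[|[|//]]]]]]]] Hc].
Qed.


Lemma pic_chk (c : 'I_8) : c != ord0 -> forall x, dlt c 1%R (pic c x) = dlt (i8 2) 1%R x.
Proof.
rewrite /dlt /pic.
case: c => [[|[|[|[|[|[|[|[|//]]]]]]]] HcC] HH.
  by case/eqP: HH; apply/val_inj.
all: move=> x; rewrite !permM !val_tperm.
all: case: x => [[|[|[|[|[|[|[|[|//]]]]]]]] Hx]; apply/val_inj.
all: reflexivity.
Qed.

Lemma basis_in_N (N : {group {perm 'I_24}}) : (N <| G2)%g -> phi @: N = ('Alt_('I_8))%g ->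
  forall c : 'I_8, c != ord0 -> mono 1%g (dlt c 1%R) \in N.
Proof.
move=> nN pN.
have sNG := normal_sub nN; have nNG := normal_norm nN.
have getn p : p \in ('Alt_('I_8))%g -> exists b, mono p b \in N.
  rewrite -pN => /imsetP [n Nn ->].
  have [a [E _]] := inM_phi (G2M (subsetP sNG n Nn)).
  by exists a; rewrite -E.
have [b0 N0] := getn pi0 alt_pi0.
pose w := dlt (i8 2) 1%R.
have Nz : mono 1%g w \in N.
  have E : mono 1%g w = ((tw ^ mono pi0 b0) * tw^-1)%g.
    rewrite tw_mono (@conj_mono _ _ _ (vecn [:: 2; 0; 0; 1; 0; 0; 0; 0])).
      rewrite mono_inv monoM mulg1; apply: mono_ext => x; rewrite perm1.
      by rewrite /w /dlt; case: x => [[|[|[|[|[|[|[|[|//]]]]]]]] Hx]; apply/val_inj.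
    by move=> x; rewrite /vecn /pi0 !permM !val_tperm; case: x => [[|[|[|[|[|[|[|[|//]]]]]]]] Hx]; apply/val_inj.
  have E2 : ((tw ^ mono pi0 b0) * tw^-1)%g = ((mono pi0 b0)^-1 * (mono pi0 b0) ^ (tw^-1))%g.
    by rewrite /conjg invgK !mulgA.
  rewrite E E2 groupM ?groupV // memJ_norm //.
  by apply: (subsetP nNG); rewrite groupV tw_G2.
move=> c Hc.
have chk := pic_chk Hc.
have [bc Nc] := getn (pic c) (alt_pic c).
have -> : mono 1%g (dlt c 1%R) = (mono 1%g w ^ mono (pic c) bc)%g.
  by rewrite (@conj_mono _ _ _ (dlt c 1%R)).
by rewrite groupJ.
Qed.

Lemma mono_sum (r : seq 'I_8) (F : 'I_8 -> 'I_8 -> 'I_3) :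
  mono 1%g (fun x => \sum_(c <- r) F c x)%R = (\prod_(c <- r) mono 1%g (F c))%g.
Proof.
elim: r => [|c r IH].
  by rewrite big_nil -mono1; apply: mono_ext => x; rewrite big_nil.
rewrite big_cons -IH monoM mulg1; apply: mono_ext => x.
by rewrite big_cons perm1 addrC.
Qed.

Lemma dlt_self c k : dlt c k c = k.
Proof. by rewrite /dlt eqxx. Qed.
Lemma val_neq0 (x : 'I_8) : x != ord0 -> (val x == 0) = false.
Proof. by move=> H; apply/negbTE; apply: contra H => /eqP H'; apply/eqP/val_inj. Qed.
Lemma dlt_0 c k : c != ord0 -> dlt c k ord0 = (- k)%R.
Proof. by move=> Hc; rewrite /dlt /= eq_sym val_neq0. Qed.
Lemma dlt_other c k x : x != c -> x != ord0 -> dlt c k x = 0%R.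
Proof.
move=> H1 H2; rewrite /dlt val_eqE (negbTE H1).
by rewrite val_neq0.
Qed.

Lemma ker_in_N (N : {group {perm 'I_24}}) : (N <| G2)%g -> phi @: N = ('Alt_('I_8))%g ->
  forall a : 'I_8 -> 'I_3, (\sum_c a c = 0)%R -> mono 1%g a \in N.
Proof.
move=> nN pN a Ha.
have B := basis_in_N nN pN.
have Hd k c : c != ord0 -> mono 1%g (dlt c k) \in N.
  move=> Hc; case: k => [[|[|[|//]]] Hk].
  - have -> : mono 1%g (dlt c (Ordinal Hk)) = mono 1%g (fun _ => 0%R).
      by apply: (@mono_ext 1%g) => x; unfold dlt; do ?case: ifP => _; apply/val_inj.
    by rewrite mono1 group1.
  - have -> : mono 1%g (dlt c (Ordinal Hk)) = mono 1%g (dlt c 1%R).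
      by apply: mono_ext => x; rewrite (_ : Ordinal Hk = 1%R) //; apply/val_inj.
    exact: B.
  - have -> : mono 1%g (dlt c (Ordinal Hk)) = (mono 1%g (dlt c 1%R) * mono 1%g (dlt c 1%R))%g.
      rewrite monoM mulg1; apply: mono_ext => x; rewrite perm1; unfold dlt.
      by do ?case: ifP => _; apply/val_inj.
    by rewrite groupM ?B.
pose F (c x : 'I_8) : 'I_3 := if c == ord0 then 0%R else dlt c (a c) x.
have -> : mono 1%g a = mono 1%g (fun x => \sum_(c <- index_enum 'I_8) F c x)%R.
  apply: mono_ext => x.
  have Ha' : a ord0 = (- \sum_(c | c != ord0) a c)%R.
    by move: Ha; rewrite (bigD1 ord0) //= => /eqP; rewrite addr_eq0 => /eqP.
  case: (eqVneq x ord0) => [->|Hx].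
    rewrite (bigD1 ord0) //= /F eqxx add0r Ha' -sumrN.
    by apply: eq_bigr => c Hc; rewrite (negbTE Hc) dlt_0.
  rewrite (bigD1 x) //= /F (negbTE Hx) dlt_self big1 ?addr0 // => c Hc.
  by case: ifP => // Hc0; rewrite dlt_other // ?Hc0 // eq_sym.
rewrite mono_sum; apply: group_prod => c _.
case: (eqVneq c ord0) => [->|Hc].
  have -> : mono 1%g (F ord0) = mono 1%g (fun _ => 0%R) by apply: mono_ext => x; rewrite /F eqxx.
  by rewrite mono1 group1.
have -> : mono 1%g (F c) = mono 1%g (dlt c (a c)) by apply: mono_ext => x; rewrite /F (negbTE Hc).
exact: Hd.
Qed.

Unset Implicit Arguments.
Local Open Scope group_scope.

Theorem proposition2p9 (N : {group {perm 'I_24}}) :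
  N <| G2 -> N :!=: 1 ->
  (phi @: N) \isog ('Alt_('I_8)) ->
  forall g : {perm 'I_24}, g \in N <-> in_L g.
Proof.
move=> nN _ iso; have sNG := normal_sub nN.
have pN := phiN_Alt sNG iso.
move=> g; split.
  move=> Ng; have Gg := subsetP sNG g Ng.
  have phiA : phi g \in 'Alt_('I_8) by rewrite -pN imset_f.
  case/gen_prodgP: Gg => n [c Hc Eg].
  pose w := [seq c i | i <- index_enum 'I_n].
  have Hall : all genV w.
    apply/allP => _ /mapP [i _ ->].
    by move: (Hc i); rewrite inE /genV => ->.
  have Ew : \prod_(x <- w) x = \prod_i c i.
    by rewrite big_map.
  have [_ Odd] := word_G2 Hall.
  exists w; split => //; last by rewrite Ew.
  by rewrite -Odd Ew -Eg -Alt_even.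
case=> w [Hall Hev ->].
have [Gp Op] := word_G2 Hall.
set p := \prod_(x <- w) x in Gp Op *.
have : phi p \in phi @: N by rewrite pN Alt_even Op.
case/imsetP => n Nn En.
have Gn := subsetP sNG n Nn.
have Gk : p * n^-1 \in G2 by rewrite groupM ?groupV.
have phik : phi (p * n^-1) = 1 by rewrite phiM ?G2M ?groupV // phiV ?G2M // En mulgV.
have [a [Ek Ha]] := inM_phi (G2M Gk).
have Nk : p * n^-1 \in N by rewrite Ek phik ker_in_N.
by rewrite -(mulgKV n p) groupM.
Qed.
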